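(* Let $Q_0,Q_1,Q_2\in\mathbb{S}^n$, $q_0,q_1,q_2\in\mathbb{R}^n$, $b_1,b_2\in\mathbb{R}$, and $A_i=\begin{pmatrix}0 & q_i^\top/2\\ q_i/2 & Q_i\end{pmatrix}$ for $i=0,1,2$. Let $\mathbf{V}_{\mathrm{opt}}=\inf\{\langle A_0,X\rangle: X\in\mathbb{S}^{n+1}_+,\ \operatorname{rank}(X)\le1,\ X_{11}=1,\ \langle A_i,X\rangle\le b_i,\ i=1,2\}$ (equal to the optimal value of $\min\{x^\top Q_0x+q_0^\top x: x^\top Q_ix+q_i^\top x\le b_i,\ i=1,2\}$) and $\mathbf{V}_{\mathrm{rel}}=\inf\{\langle A_0,X\rangle: X\in\mathbb{S}^{n+1}_+,\ X_{11}=1,\ \langle A_i,X\rangle\le b_i,\ i=1,2\}$. Suppose $\mathbf{V}_{\mathrm{rel}}$ is finite and the set of optimal solutions of the latter (relaxed) problem is bounded. If there is an optimal solution of the relaxed problem at which one of the two constraints $\langle A_i,X\rangle\le b_i$ ($i\in\{1,2\}$) is not binding, then $\mathbf{V}_{\mathrm{opt}}=\mathbf{V}_{\mathrm{rel}}$.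
   Context: $\langle A,X\rangle=\operatorname{tr}(A^\top X)$; $\mathbb{S}^n$ denotes symmetric $n\times n$ matrices and $\mathbb{S}^{n+1}_+$ positive semidefinite $(n+1)\times(n+1)$ matrices. A constraint $\langle A_i,X\rangle\le b_i$ is binding at $X$ if it holds with equality. *)

(* Defs.v *)
From HB Require Import structures.
From mathcomp Require Import all_boot all_order all_algebra.
From mathcomp Require Import all_classical all_reals ereal.
Set Implicit Arguments. Unset Strict Implicit. Unset Printing Implicit Defensive.
Import Order.TTheory GRing.Theory Num.Theory.
Local Open Scope ring_scope.
Local Open Scope classical_set_scope.

Definition frob (R : realType) (m : nat) (A X : 'M[R]_m) : R := \tr (A^T *m X).

Definition psd (R : realType) (m : nat) (X : 'M[R]_m) : Prop :=
  X^T = X /\ forall v : 'rV[R]_m, 0 <= (v *m X *m v^T) 0 0.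

Definition liftA (R : realType) (n : nat) (Q : 'M[R]_n) (q : 'cV[R]_n) : 'M[R]_(1 + n) :=
  block_mx (0 : 'M[R]_1) ((2%:R)^-1 *: q^T) ((2%:R)^-1 *: q) Q.

Definition feas_rel (R : realType) (n : nat) (A1 A2 : 'M[R]_(1 + n)) (b1 b2 : R)
  (X : 'M[R]_(1 + n)) : Prop :=
  psd X /\ X ord0 ord0 = 1 /\ frob A1 X <= b1 /\ frob A2 X <= b2.

Definition feas_opt (R : realType) (n : nat) (A1 A2 : 'M[R]_(1 + n)) (b1 b2 : R)
  (X : 'M[R]_(1 + n)) : Prop :=
  feas_rel A1 A2 b1 b2 X /\ (\rank X <= 1)%N.

Definition Vrel (R : realType) (n : nat) (A0 A1 A2 : 'M[R]_(1 + n)) (b1 b2 : R) : \bar R :=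
  ereal_inf [set (frob A0 X)%:E | X in feas_rel A1 A2 b1 b2].

Definition Vopt (R : realType) (n : nat) (A0 A1 A2 : 'M[R]_(1 + n)) (b1 b2 : R) : \bar R :=
  ereal_inf [set (frob A0 X)%:E | X in feas_opt A1 A2 b1 b2].

(* Main.v *)
Require Import Defs.
From HB Require Import structures.
From mathcomp Require Import all_boot all_order all_algebra.
From mathcomp Require Import all_classical all_reals ereal.
From mathcomp Require Import ring lra.
Import Order.TTheory GRing.Theory Num.Theory.
Local Open Scope ring_scope.

Lemma small_eps (R : realType) (A B mu s : R) : 0 <= A -> 0 <= B -> 0 < mu -> 0 < s ->
  exists e : R, [/\ 0 < e, e <= 1, e * (1 + A) <= mu & e * (1 + B) <= s].
Proof.
move=> A0 B0 mu0 s0.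
have hA : 0 < 1 + A by lra. have hB : 0 < 1 + B by lra.
pose e1 := mu / (1 + A). pose e2 := s / (1 + B).
have e10 : 0 < e1 by rewrite divr_gt0. have e20 : 0 < e2 by rewrite divr_gt0.
exists (Num.min 1 (Num.min e1 e2)); split.
- by rewrite !lt_min ltr01 e10 e20.
- by rewrite ge_min lexx.
- rewrite -ler_pdivlMr //; by rewrite !ge_min lexx orbT.
- rewrite -ler_pdivlMr //; by rewrite !ge_min lexx !orbT.
Qed.

Arguments small_eps {R A B mu s}.

Lemma two_d (R : realType) (mu b1 b2 P0 R0 S0 P1 R1 S1 P2 R2 S2 : R) :
 0 < mu -> P1 <= b1 -> P2 < b2 ->
 (forall a c, a^+2 <= c -> P1 + a*R1 + (c-mu)*S1 <= b1 ->
     P2 + a*R2 + (c-mu)*S2 <= b2 -> P0 <= P0 + a*R0 + (c-mu)*S0) ->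
 (exists M, forall c, mu <= c -> P1 + 0*R1 + (c-mu)*S1 <= b1 ->
     P2 + 0*R2 + (c-mu)*S2 <= b2 -> P0 + 0*R0 + (c-mu)*S0 = P0 -> c <= M) ->
 exists a, [/\ P1 + a*R1 + (a^+2-mu)*S1 <= b1, P2 + a*R2 + (a^+2-mu)*S2 < b2
   & P0 + a*R0 + (a^+2 - mu)*S0 <= P0].
Proof.
move=> mu0 h1 h2 opt [M bnd].
have sl : 0 < b2 - P2 by lra.
have [S1z|S1nz] := eqVneq S1 0; last first.
  pose m := - R1 / S1.
  have k1 : R1 + m * S1 = 0 by rewrite /m mulNr mulNr divfK // subrr.
  have [e [e0 e1 em e2]] := small_eps (normr_ge0 m) (normr_ge0 (R2 + m * S2)) mu0 sl.
  have nm1 := ler_norm m. have nm2 : - m <= `|m| by rewrite -normrN ler_norm.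
  set k2 := R2 + m * S2.
  have nk1 := ler_norm k2. have nk2 : - k2 <= `|k2| by rewrite -normrN ler_norm.
  have k0 : R0 + m * S0 = 0.
    have o1 := opt e (mu + m * e).
    have o2 := opt (- e) (mu + m * (- e)).
    have ee : e ^+ 2 <= e by rewrite expr2; nra.
    have A1 : e * m <= e * `|m| by nra.
    have A2 : - (e * m) <= e * `|m| by nra.
    have B1 : e * k2 <= e * `|k2| by nra.
    have B2 : - (e * k2) <= e * `|k2| by nra.
    have : P0 <= P0 + e * R0 + (mu + m * e - mu) * S0.
      apply: o1.
      + nra.
      + have -> : P1 + e * R1 + (mu + m * e - mu) * S1 = P1 + e * (R1 + m * S1) by ring.
        rewrite k1; lra.
      + have -> : P2 + e * R2 + (mu + m * e - mu) * S2 = P2 + e * k2 by rewrite /k2; ring.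
        nra.
    have : P0 <= P0 + (- e) * R0 + (mu + m * (- e) - mu) * S0.
      apply: o2.
      + rewrite sqrrN; nra.
      + have -> : P1 + (-e) * R1 + (mu + m * (-e) - mu) * S1 = P1 - e * (R1 + m * S1) by ring.
        rewrite k1; lra.
      + have -> : P2 + (-e) * R2 + (mu + m * (-e) - mu) * S2 = P2 - e * k2 by rewrite /k2; ring.
        nra.
    move=> q1 q2.
    have q1' : 0 <= - (e * (R0 + m * S0)) by lra.
    have q2' : 0 <= e * (R0 + m * S0) by lra.
    have : e * (R0 + m * S0) = 0 by lra.
    by move/eqP; rewrite mulf_eq0 gt_eqF //= => /eqP.
  pose D := m ^+ 2 + 4%:R * mu.
  have D0 : 0 <= D by rewrite /D; nra.
  pose sq := Num.sqrt D.
  have sqD : sq ^+ 2 = D by rewrite /sq sqr_sqrtr.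
  have sq0 : 0 <= sq by rewrite /sq sqrtr_ge0.
  have sqm1 : m <= sq by rewrite /D in sqD; nra.
  have sqm2 : - m <= sq by rewrite /D in sqD; nra.
  have root a : a = (m + sq) / 2%:R \/ a = (m - sq) / 2%:R -> a ^+ 2 - mu = m * a.
    rewrite /D in sqD.
    have E s : ((m + s) / 2%:R) ^+ 2 - mu - m * ((m + s) / 2%:R) = (s ^+ 2 - (m ^+ 2 + 4%:R * mu)) / 4%:R by field.
    have E' s : ((m - s) / 2%:R) ^+ 2 - mu - m * ((m - s) / 2%:R) = (s ^+ 2 - (m ^+ 2 + 4%:R * mu)) / 4%:R by field.
    by case=> ->; apply/eqP; rewrite -subr_eq0 ?E ?E' ?sqrrN sqD subrr mul0r.
  have fin a : a ^+ 2 - mu = m * a -> a * k2 <= 0 ->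
    [/\ P1 + a*R1 + (a^+2-mu)*S1 <= b1, P2 + a*R2 + (a^+2-mu)*S2 < b2
     & P0 + a*R0 + (a^+2 - mu)*S0 <= P0].
    move=> -> ak; split.
    + have -> : P1 + a * R1 + m * a * S1 = P1 + a * (R1 + m * S1) by ring.
      rewrite k1; lra.
    + have -> : P2 + a * R2 + m * a * S2 = P2 + a * k2 by rewrite /k2; ring.
      lra.
    + have -> : P0 + a * R0 + m * a * S0 = P0 + a * (R0 + m * S0) by ring.
      rewrite k0; lra.
  have [k2le|k2gt] := lerP k2 0.
    exists ((m + sq) / 2%:R); apply: fin; first by apply: root; left.
    have : 0 <= (m + sq) / 2%:R by apply: divr_ge0; lra.
    nra.
  exists ((m - sq) / 2%:R); apply: fin; first by apply: root; right.
  have : (m - sq) / 2%:R <= 0 by rewrite pmulr_lle0 ?invr_gt0 //; lra.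
  nra.
have [e [e0 e1 em e2]] := small_eps (lexx 0) (normr_ge0 S2) mu0 sl.
have nk1 := ler_norm S2. have nk2 : - S2 <= `|S2| by rewrite -normrN ler_norm.
have S00 : S0 = 0.
  have o1 := opt 0 (mu + e).
  have o2 := opt 0 (mu - e).
  have B1 : e * S2 <= e * `|S2| by nra.
  have B2 : - (e * S2) <= e * `|S2| by nra.
  rewrite S1z in o1 o2.
  have q1 : P0 <= P0 + 0 * R0 + (mu + e - mu) * S0.
    apply: o1; rewrite ?expr2; nra.
  have q2 : P0 <= P0 + 0 * R0 + (mu - e - mu) * S0.
    apply: o2; rewrite ?expr2; nra.
  have : e * S0 = 0 by nra.
  by move/eqP; rewrite mulf_eq0 gt_eqF //= => /eqP.
have [S2ge|S2lt] := lerP 0 S2.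
  exists 0; rewrite S1z S00; split; rewrite ?expr2; nra.
exfalso.
have c0 : mu <= Num.max mu M + 1 by rewrite -subr_ge0; have := le_max mu mu M; rewrite lexx /=; lra.
have := bnd (Num.max mu M + 1) c0.
rewrite S1z S00.
have hM : M <= Num.max mu M by rewrite le_max lexx orbT.
have : (P2 + 0 * R2 + (Num.max mu M + 1 - mu) * S2 <= b2) by nra.
move=> q /(_ ltac:(lra) q ltac:(lra)); lra.
Qed.

Section Mx.
Variable R : realType.
Variable m : nat.
Implicit Types (B C : 'M[R]_m) (u v : 'rV[R]_m) (y z : 'cV[R]_m).

Definition bil B u v : R := (u *m B *m v^T) 0 0.

Lemma bilDl B u1 u2 v : bil B (u1 + u2) v = bil B u1 v + bil B u2 v.
Proof. by rewrite /bil !mulmxDl mxE. Qed.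
Lemma bilZl B t u v : bil B (t *: u) v = t * bil B u v.
Proof. by rewrite /bil -!scalemxAl mxE. Qed.
Lemma bilDr B u v1 v2 : bil B u (v1 + v2) = bil B u v1 + bil B u v2.
Proof. by rewrite /bil linearD /= mulmxDr mxE. Qed.
Lemma bilZr B t u v : bil B u (t *: v) = t * bil B u v.
Proof. by rewrite /bil linearZ /= -scalemxAr mxE. Qed.
Lemma bilMrk y z u v : bil (y *m z^T) u v = (u *m y) 0 0 * (v *m z) 0 0.
Proof.
rewrite /bil mulmxA -(mulmxA (u *m y)) -trmx_mul.
rewrite [in LHS]mxE big_ord1; congr (_ * _); by rewrite mxE.
Qed.
Lemma bil_sym B u v : B^T = B -> bil B u v = bil B v u.
Proof.
move=> BT; rewrite /bil.
have -> : (u *m B *m v^T) 0 0 = ((u *m B *m v^T)^T) 0 0 by rewrite [RHS]mxE.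
by rewrite !trmx_mul trmxK BT mulmxA.
Qed.
Lemma bilD B C u v : bil (B + C) u v = bil B u v + bil C u v.
Proof. by rewrite /bil mulmxDr mulmxDl mxE. Qed.
Lemma bilZ t B u v : bil (t *: B) u v = t * bil B u v.
Proof. by rewrite /bil -scalemxAr -scalemxAl mxE. Qed.
Lemma bilE B i j : bil B (delta_mx 0 i) (delta_mx 0 j) = B i j.
Proof. by rewrite /bil -(rowE i B) trmx_delta -colE !mxE. Qed.
Lemma mulcolE B u i : (u *m (B *m (delta_mx i 0 : 'cV_m))) 0 0 = bil B u (delta_mx 0 i).
Proof. by rewrite /bil trmx_delta mulmxA. Qed.

Lemma psd_quad B : psd B -> forall v, 0 <= bil B v v.
Proof. by case. Qed.

Lemma CS B u v : psd B -> bil B u v ^+ 2 <= bil B u u * bil B v v.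
Proof.
case=> BT Bp.
have key t : 0 <= bil B u u + 2%:R * t * bil B u v + t ^+ 2 * bil B v v.
  have := @psd_quad B (conj BT Bp) (u + t *: v).
  rewrite !bilDl !bilDr !bilZl !bilZr (bil_sym B v u BT); move=> h; nra.
have h0 := @psd_quad B (conj BT Bp) u. have h1 := @psd_quad B (conj BT Bp) v.
set a := bil B u u in key h0 *. set b := bil B u v in key *. set c := bil B v v in key h1 *.
have [c0|cpos] := eqVneq c 0.
  have [b0|bn] := eqVneq b 0; first by rewrite b0 c0 expr2 mulr0 mulr0 lexx.
  have := key (- (a + 1) / (2%:R * b)).
  rewrite c0 mulr0 addr0.
  have -> : 2%:R * (- (a + 1) / (2%:R * b)) * b = - (a + 1) by field; rewrite bn.
  lra.
have cp : 0 < c by rewrite lt_def cpos h1.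
have := key (- b / c).
have -> : a + 2%:R * (- b / c) * b + (- b / c) ^+ 2 * c = a - b ^+ 2 / c by field; rewrite cpos.
rewrite subr_ge0 ler_pdivrMr //; lra.
Qed.

Lemma psd_add B C : psd B -> psd C -> psd (B + C).
Proof.
case=> BT Bp [CT Cp]; split; first by rewrite linearD /= BT CT.
by move=> v; rewrite mulmxDr mulmxDl mxE; exact: addr_ge0.
Qed.
Lemma psd_scale t B : 0 <= t -> psd B -> psd (t *: B).
Proof.
move=> t0 [BT Bp]; split; first by rewrite linearZ /= BT.
by move=> v; rewrite -scalemxAr -scalemxAl mxE; exact: mulr_ge0.
Qed.
Lemma psd_rk1 y : psd (y *m y^T).
Proof.
split; first by rewrite trmx_mul trmxK.
by move=> v; have := bilMrk y y v v; rewrite /bil => ->; rewrite -expr2 sqr_ge0.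
Qed.

End Mx.
Arguments bil {R m}. Arguments bilE {R m}. Arguments CS {R m B}. Arguments psd_quad {R m B}.
Arguments mulcolE {R m}. Arguments psd_add {R m B C}. Arguments psd_scale {R m t B}.
Arguments psd_rk1 {R m}. Arguments bilD {R m}. Arguments bilZ {R m}. Arguments bilMrk {R m}.

Section Main.
Variable R : realType.
Variable n : nat.
Variables (A0 A1 A2 : 'M[R]_(1 + n)) (b1 b2 v M : R).
Hypothesis opt : forall Y, feas_rel A1 A2 b1 b2 Y -> v <= frob A0 Y.
Hypothesis bnd : forall Y, feas_rel A1 A2 b1 b2 Y -> frob A0 Y = v -> forall i j, `|Y i j| <= M.

Lemma frobD (A B C : 'M[R]_(1 + n)) : frob A (B + C) = frob A B + frob A C.
Proof. by rewrite /frob mulmxDr mxtraceD. Qed.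
Lemma frobZ (A : 'M[R]_(1 + n)) t B : frob A (t *: B) = t * frob A B.
Proof. by rewrite /frob -scalemxAr mxtraceZ. Qed.

Lemma diag_ge0 (W : 'M[R]_(1 + n)) i : psd W -> 0 <= W i i.
Proof. by move=> h; rewrite -bilE; apply: psd_quad. Qed.
Lemma CSentry (W : 'M[R]_(1 + n)) i j : psd W -> W i j ^+ 2 <= W i i * W j j.
Proof. by move=> h; rewrite -!bilE; apply: CS. Qed.

Lemma step (W : 'M[R]_(1 + n)) (y : 'cV[R]_(1 + n)) k0 :
  W k0 k0 != 0 -> psd W -> y ord0 0 = 1 -> W ord0 ord0 = 0 ->
  feas_rel A1 A2 b1 b2 (y *m y^T + W) -> frob A0 (y *m y^T + W) = v ->
  frob A2 (y *m y^T + W) < b2 ->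
  exists (W' : 'M[R]_(1 + n)) (y' : 'cV[R]_(1 + n)),
   [/\ (#|[pred i | W' i i != 0%R]| < #|[pred i | W i i != 0%R]|)%N, psd W',
       y' ord0 0 = 1, W' ord0 ord0 = 0 &
   [/\ feas_rel A1 A2 b1 b2 (y' *m y'^T + W'), frob A0 (y' *m y'^T + W') = v
     & frob A2 (y' *m y'^T + W') < b2]].
Proof.
move=> hk0 psdW y0 W00 feas fv sl.
have lam0 : 0 < W k0 k0 by rewrite lt_def hk0 diag_ge0.
set lam := W k0 k0 in lam0 hk0.
have [w [wE wb]] : exists w : 'cV[R]_(1 + n), (forall i, w i 0 = W i k0) /\
    forall u, (u *m w) 0 0 = bil W u (delta_mx 0 k0).
  exists (W *m delta_mx k0 0); split; first by move=> i; rewrite -colE mxE.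
  by move=> u; apply: mulcolE.
have hW0k : W ord0 k0 = 0.
  have := CSentry W ord0 k0 psdW; rewrite W00 mul0r => h.
  by apply/eqP; rewrite -sqrf_eq0 eq_le h sqr_ge0.
have w0 : w ord0 0 = 0 by rewrite wE.
pose mu := lam^-1.
have mu0 : 0 < mu by rewrite invr_gt0.
have mul : mu * lam = 1 by rewrite mulVf // gt_eqF.
have [W' [W'E psdW']] : exists W' : 'M[R]_(1 + n),
    (forall i j, W' i j = W i j - mu * (W i k0 * W j k0)) /\ psd W'.
  exists (W + (- mu) *: (w *m w^T)); split.
    by move=> i j; rewrite !mxE big_ord1 !mxE !wE mulNr.
  case: psdW => WT Wq; split.
    apply/matrixP => i j.
    have := congr1 (fun B : 'M[R]_(1 + n) => B i j) WT; rewrite [X in X = _]mxE => Wji.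
    rewrite !mxE !big_ord1 !mxE Wji; ring.
  move=> u; rewrite -/(bil _ _ _) bilD bilZ bilMrk !wb.
  have h := CS u (delta_mx 0 k0) (conj WT Wq).
  rewrite bilE -/lam in h.
  have h2 := Wq u; rewrite -/(bil _ _ _) in h2.
  set s := bil W u (delta_mx 0 k0) in h *.
  set Q := bil W u u in h h2 *.
  have : mu * s ^+ 2 <= mu * (Q * lam) by rewrite ler_wpM2l // ltW.
  rewrite [mu * (Q * lam)]mulrCA mul mulr1 expr2 mulNr; lra.
have W'00 : W' ord0 ord0 = 0 by rewrite W'E W00 hW0k mul0r mulr0 subr0.
have W'kk : W' k0 k0 = 0 by rewrite W'E -/lam mulrA mul mul1r subrr.
have meas : (#|[pred i | W' i i != 0%R]| < #|[pred i | W i i != 0%R]|)%N.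
  apply: proper_card; apply/properP; split.
    apply/fintype.subsetP => i; rewrite !inE; apply: contra_neq => Wii.
    have := CSentry W i k0 psdW; rewrite Wii mul0r => h.
    have hik : W i k0 = 0 by apply/eqP; rewrite -sqrf_eq0 eq_le h sqr_ge0.
    by rewrite W'E Wii hik mul0r mulr0 subr0.
  by exists k0; rewrite !inE ?W'kk ?eqxx.
pose X := y *m y^T + W.
pose Xac a c := X + a *: (y *m w^T + w *m y^T) + (c - mu) *: (w *m w^T).
have dec a c : Xac a c = (y + a *: w) *m (y + a *: w)^T + (c - a ^+ 2) *: (w *m w^T) + W'.
  apply/matrixP => i j; rewrite /Xac /X !mxE !big_ord1 !mxE W'E !wE /mu; ring.
have frobX A a c : frob A (Xac a c) = frob A X + a * frob A (y *m w^T + w *m y^T)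
    + (c - mu) * frob A (w *m w^T).
  by rewrite /Xac frobD frobZ frobD frobZ.
have feasX a c : a ^+ 2 <= c -> frob A1 (Xac a c) <= b1 -> frob A2 (Xac a c) <= b2 ->
    feas_rel A1 A2 b1 b2 (Xac a c).
  move=> ac h1 h2; split; last split=> //.
    rewrite dec; apply: psd_add => //; apply: psd_add; first exact: psd_rk1.
    by apply: psd_scale; [rewrite subr_ge0 | exact: psd_rk1].
  rewrite /Xac /X !mxE !big_ord1 !mxE y0 W00 w0; ring.
case: feas => _ [_ [f1 _]].
have := @two_d R mu b1 b2 (frob A0 X) (frob A0 (y *m w^T + w *m y^T)) (frob A0 (w *m w^T))
  (frob A1 X) (frob A1 (y *m w^T + w *m y^T)) (frob A1 (w *m w^T))
  (frob A2 X) (frob A2 (y *m w^T + w *m y^T)) (frob A2 (w *m w^T)) mu0 f1 sl.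
case.
- move=> a c ac h1 h2; rewrite -!frobX in h1 h2 *; rewrite [X in X <= _]fv.
  by apply: opt; apply: feasX.
- exists (mu + (M - (y k0 0 * y k0 0 + lam)) / lam ^+ 2).
  move=> c hc h1 h2 h0.
  have ac : 0 ^+ 2 <= c by rewrite expr2 mul0r; lra.
  rewrite -!frobX in h1 h2 h0.
  have F := feasX 0 c ac h1 h2.
  have hb := bnd _ F (etrans h0 fv) k0 k0.
  move: hb; rewrite /Xac /X !mxE !big_ord1 !mxE !wE -/lam => hb.
  have hb2 := le_trans (ler_norm _) hb.
  have q : (c - mu) * lam ^+ 2 <= M - (y k0 0 * y k0 0 + lam) by rewrite expr2; lra.
  have : c - mu <= (M - (y k0 0 * y k0 0 + lam)) / lam ^+ 2.
    by rewrite ler_pdivlMr // exprn_gt0.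
  lra.
move=> a [c1 c2 c0].
rewrite -!frobX in c1 c2 c0.
have hX' : (y + a *: w) *m (y + a *: w)^T + W' = Xac a (a ^+ 2).
  by rewrite dec subrr scale0r addr0.
have F := feasX a (a ^+ 2) (lexx _) c1 (ltW c2).
exists W', (y + a *: w); split => //.
  by rewrite !mxE w0 y0 mulr0 addr0.
rewrite hX'; split => //.
by apply/le_anti; rewrite opt // andbT -fv.
Qed.


Lemma zero_case (W : 'M[R]_(1 + n)) (y : 'cV[R]_(1 + n)) :
  psd W -> (forall i, W i i = 0) ->
  feas_rel A1 A2 b1 b2 (y *m y^T + W) -> frob A0 (y *m y^T + W) = v ->
  exists Z, feas_opt A1 A2 b1 b2 Z /\ frob A0 Z = v.
Proof.
move=> psdW W0 feas fv.
have Wz : W = 0.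
  apply/matrixP => i j; rewrite mxE.
  have := CSentry W i j psdW; rewrite !W0 mul0r => h.
  by apply/eqP; rewrite -sqrf_eq0 eq_le h sqr_ge0.
rewrite Wz addr0 in feas fv.
exists (y *m y^T); split => //; split => //.
exact: leq_trans (mxrankM_maxl _ _) (rank_leq_col _).
Qed.

Lemma main_ind k : forall (W : 'M[R]_(1 + n)) (y : 'cV[R]_(1 + n)),
  (#|[pred i | W i i != 0%R]| <= k)%N -> psd W -> y ord0 0 = 1 -> W ord0 ord0 = 0 ->
  feas_rel A1 A2 b1 b2 (y *m y^T + W) -> frob A0 (y *m y^T + W) = v ->
  frob A2 (y *m y^T + W) < b2 ->
  exists Z, feas_opt A1 A2 b1 b2 Z /\ frob A0 Z = v.
Proof.
elim: k => [|k IH] W y hk psdW y0 W00 feas fv sl.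
  case: (pselect (exists i, W i i != 0)) => [[k0 hk0]|none].
    have h : (0 < #|[pred i | W i i != 0%R]|)%N by apply/card_gt0P; exists k0.
    by have := leq_trans h hk.
  apply: (zero_case W y psdW) => // i; case: (eqVneq (W i i) 0) => // h.
  by exfalso; apply: none; exists i.
case: (pselect (exists i, W i i != 0)) => [[k0 hk0]|none].
  have [W' [y' [meas psdW' y'0 W'00 [f' v' s']]]] := step W y k0 hk0 psdW y0 W00 feas fv sl.
  apply: (IH W' y') => //.
  by rewrite -ltnS; exact: leq_trans meas hk.
apply: (zero_case W y psdW) => // i; case: (eqVneq (W i i) 0) => // h.
by exfalso; apply: none; exists i.
Qed.

Lemma init (X : 'M[R]_(1 + n)) : psd X -> X ord0 ord0 = 1 ->
  exists (y : 'cV[R]_(1 + n)) (W : 'M[R]_(1 + n)),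
    [/\ psd W, y ord0 0 = 1, W ord0 ord0 = 0 & X = y *m y^T + W].
Proof.
move=> psdX X00.
have [y [yE yb]] : exists y : 'cV[R]_(1 + n), (forall i, y i 0 = X i ord0) /\
    forall u, (u *m y) 0 0 = bil X u (delta_mx 0 ord0).
  exists (X *m delta_mx ord0 0); split; first by move=> i; rewrite -colE mxE.
  by move=> u; apply: mulcolE.
exists y, (X - y *m y^T); split.
- case: (psdX) => XT Xq; split.
    apply/matrixP => i j.
    have := congr1 (fun B : 'M[R]_(1 + n) => B i j) XT; rewrite [X in X = _]mxE => Xji.
    rewrite !mxE !big_ord1 !mxE Xji; ring.
  move=> u; rewrite -/(bil _ _ _).
  have -> : X - y *m y^T = X + (-1) *: (y *m y^T) by rewrite scaleN1r.
  rewrite bilD bilZ bilMrk !yb.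
  have h := CS u (delta_mx 0 ord0) psdX.
  rewrite bilE X00 mulr1 in h.
  rewrite expr2 in h; lra.
- by rewrite yE.
- by rewrite !mxE big_ord1 !mxE !yE X00 mulr1 subrr.
- by rewrite addrC subrK.
Qed.

End Main.

Lemma feas_swap {R : realType} {n} {A1 A2 : 'M[R]_(1 + n)} {b1 b2 Y} :
  feas_rel A1 A2 b1 b2 Y -> feas_rel A2 A1 b2 b1 Y.
Proof. by case=> [p [e [h1 h2]]]. Qed.

Theorem corollary9 (R : realType) (n : nat)
  (Q0 Q1 Q2 : 'M[R]_n) (q0 q1 q2 : 'cV[R]_n) (b1 b2 : R) :
  Q0^T = Q0 -> Q1^T = Q1 -> Q2^T = Q2 ->
  let A0 := liftA Q0 q0 in let A1 := liftA Q1 q1 in let A2 := liftA Q2 q2 in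
  Vrel A0 A1 A2 b1 b2 \is a fin_num ->
  (exists M : R, forall X : 'M[R]_(1 + n),
      feas_rel A1 A2 b1 b2 X -> (frob A0 X)%:E = Vrel A0 A1 A2 b1 b2 ->
      forall i j, `|X i j| <= M) ->
  (exists X : 'M[R]_(1 + n),
      [/\ feas_rel A1 A2 b1 b2 X, (frob A0 X)%:E = Vrel A0 A1 A2 b1 b2 &
          frob A1 X < b1 \/ frob A2 X < b2]) ->
  Vopt A0 A1 A2 b1 b2 = Vrel A0 A1 A2 b1 b2.
Proof.
move=> _ _ _ A0 A1 A2 hfin [M hM] [X [fX oX sX]].
have hv := fineK hfin.
set v := fine (Vrel A0 A1 A2 b1 b2) in hv.
have opt Y : feas_rel A1 A2 b1 b2 Y -> v <= frob A0 Y.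
  move=> fY; rewrite -lee_fin hv; apply: ereal_inf_lbound; by exists Y.
have bnd Y : feas_rel A1 A2 b1 b2 Y -> frob A0 Y = v -> forall i j, `|Y i j| <= M.
  by move=> fY e i j; apply: (hM Y fY); rewrite e hv.
have Xv : frob A0 X = v by apply: EFin_inj; rewrite hv.
have [y [W [psdW y0 W00 XE]]] := @init R n X fX.1 fX.2.1.
rewrite XE in fX Xv sX.
have [Z [fZ eZ]] : exists Z, feas_opt A1 A2 b1 b2 Z /\ frob A0 Z = v.
  case: sX => s.
    have opt' Y : feas_rel A2 A1 b2 b1 Y -> v <= frob A0 Y by move/feas_swap; apply: opt.
    have bnd' Y : feas_rel A2 A1 b2 b1 Y -> frob A0 Y = v -> forall i j, `|Y i j| <= M.
      by move/feas_swap; apply: bnd.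
    have [Z [[fZ rZ] eZ]] := @main_ind R n A0 A2 A1 b2 b1 v M opt' bnd' _ W y (leqnn _) psdW y0 W00
      (feas_swap fX) Xv s.
    by exists Z; split => //; split => //; apply: feas_swap.
  exact: (@main_ind R n A0 A1 A2 b1 b2 v M opt bnd _ W y (leqnn _) psdW y0 W00
      fX Xv s).
apply/le_anti/andP; split.
  rewrite -hv -eZ; apply: ereal_inf_lbound; by exists Z.
by apply: ereal_inf_le_tmp => _ [Y [fY _] <-]; exists Y.
Qed.
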